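(* Let $a_2,a_3$ be integers with $1<a_2<a_3$ and $A=\{1,a_2,a_3\}$. Then $h_1\le h_0$.
   Context: An integer $x$ has an $h$-representation if $x=c_3a_3+c_2a_2+c_1$ with integers $c_1,c_2,c_3\ge0$ and $c_1+c_2+c_3\le h$. $X(h)$ is one less than the smallest positive integer with no $h$-representation. $h_0$ is the smallest $h$ with $X(h)\ge a_3$, and $h_1$ is the smallest $h$ such that $X(h'+1)=X(h')+a_3$ for all $h'\ge h$. *)

(* Defs.v *)
From mathcomp Require Import all_boot.
From mathcomp Require Import zify.
Set Implicit Arguments. Unset Strict Implicit. Unset Printing Implicit Defensive.

(* A = {1, a2, a3}.  x has an h-representation iff
   x = c3*a3 + c2*a2 + c1 with c1,c2,c3 >= 0 and c1+c2+c3 <= h.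
   (Each ci <= h necessarily, so quantifying over 'I_h.+1 is exact.) *)
Definition hrep (a2 a3 h x : nat) : bool :=
  [exists c1 : 'I_h.+1, exists c2 : 'I_h.+1, exists c3 : 'I_h.+1,
     (c1 + c2 + c3 <= h) && (x == c3 * a3 + c2 * a2 + c1)].

Definition no_hrep_pos (a2 a3 h : nat) : pred nat :=
  fun m => (0 < m) && ~~ hrep a2 a3 h m.

Lemma exists_no_hrep_pos a2 a3 h : exists m, no_hrep_pos a2 a3 h m.
Proof.
exists (h * (a3 + a2 + 1)).+1; rewrite /no_hrep_pos /=.
apply/existsP => -[c1 /existsP [c2 /existsP [c3 /andP [Hs /eqP He]]]].
have H1 := ltn_ord c1; have H2 := ltn_ord c2; have H3 := ltn_ord c3.
move: He Hs H1 H2 H3.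
move: (nat_of_ord c1) (nat_of_ord c2) (nat_of_ord c3) => x y z.
nia.
Qed.

Definition X (a2 a3 h : nat) : nat := (ex_minn (exists_no_hrep_pos a2 a3 h)).-1.

Definition is_h0 (a2 a3 h : nat) : Prop :=
  a3 <= X a2 a3 h /\ forall h', a3 <= X a2 a3 h' -> h <= h'.

Definition stable_from (a2 a3 h : nat) : Prop :=
  forall h', h <= h' -> X a2 a3 h'.+1 = X a2 a3 h' + a3.

Definition is_h1 (a2 a3 h : nat) : Prop :=
  stable_from a2 a3 h /\ forall h', stable_from a2 a3 h' -> h <= h'.

(* Main.v *)
Require Import Defs.
From mathcomp Require Import all_boot zify.
Set Implicit Arguments. Unset Strict Implicit. Unset Printing Implicit Defensive.
From Stdlib Require Import Classical.
Lemma farey_contra (a b q r R sg Q h k h' k' : nat) :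
 b = q * a + r -> r < a -> 1 <= q -> 
 q + a <= Q + 1 + R + sg ->
 q + 1 <= Q ->
 h' * k = h * k' + 1 ->
 h * b < k * a -> a * k' < h' * b ->
 Q + 1 <= k + k' ->
 R + k' * a < h' * b ->
 (h = 0 \/ sg + h * b + k < k * a + h) ->
 False.
Proof.
move=> Hb Hr Hq HQ HQq Hdet Hl Hu Hkk Hal Hbe.
case: (posnP h) => [h0|hpos].
- subst h. have : h' * k == 1 by apply/eqP; lia.
  rewrite muln_eq1 => /andP [/eqP E1 /eqP E2].
  subst h' k.
  have : k' < q + 1.
  { have : a * k' < a * (q + 1) by timeout 10 nia.
    by rewrite ltn_pmul2l; lia. }
  lia.
- have {}Hbe : sg + h * b + k < k * a + h by case: Hbe => //; lia.
  have h'pos : 1 <= h'.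
  { case: (posnP h') => // e; rewrite e mul0n in Hu; lia. }
  have [al Eal] : exists al, h' * b = k' * a + al by exists (h' * b - k' * a); lia.
  have [be Ebe] : exists be, k * a = h * b + be by exists (k * a - h * b); lia.
  have Ea : a = al * h + be * h'.
  { clear -Eal Ebe Hdet. timeout 20 nia. }
  have Ebb : b = al * k + be * k'.
  { clear -Eal Ebe Hdet. timeout 20 nia. }
  have Hal' : R + 1 <= al by lia.
  have Hbe' : sg + k + 1 <= be + h by lia.
  have Hkh : h < k.
  { case: (ltnP h k) => // Hkh. have : k * a <= h * b.
    { apply: leq_mul => //. rewrite Hb. have : a <= q * a by rewrite leq_pmull. lia. }
    lia. }
  have [m Ek] : exists m, k = h + m by exists (k - h); lia.
  have H1 : q + (m + 1) * h' <= m + k'.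
  { have A1 : (R + 1) * h <= al * h by apply: leq_mul.
    have A2 : (sg + m + 1) * h' <= be * h' by apply: leq_mul => //; lia.
    have A3 : R <= R * h by rewrite leq_pmulr.
    have A4 : sg <= sg * h' by rewrite leq_pmulr.
    have A5 : q + a <= k + k' + R + sg by lia.
    rewrite Ea in A5. rewrite !mulnDl mul1n in A1 A2 *.
    lia. }
  have Hb2 : b + 1 <= (q + 1) * a.
  { rewrite Hb mulnDl mul1n. lia. }
  rewrite Ek in Hdet Ebb. rewrite Ea Ebb in Hb2.
  clear Hl Hu Hal Hbe Ea Ebb Eal Ebe Hkk Hbe' Hkh Hb HQ HQq Hr Ek.
  case: (ltnP 1 h) => Hh; case: (ltnP 1 h') => Hh'.
  + have Hp : h + h' <= h * h' by timeout 10 nia.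
    have Hp2 : m * (h + h') <= m * (h * h') by apply: leq_mul.
    have Hp3 : h * (q + (m + 1) * h') <= h * (m + k') by apply: leq_mul.
    timeout 30 nia.
  + have e : h' = 1 by lia. subst h'.
    have Hk : q + 1 <= k' by lia.
    have P1 : al * (h * (q + 1) + 1) <= al * (h + m).
    { apply: leq_mul => //. timeout 10 nia. }
    have P2 : be * (q + 1) <= be * k' by apply: leq_mul.
    timeout 30 nia.
  + have e : h = 1 by lia. subst h.
    have Hm : q + 1 <= m by lia.
    have P1 : al * (q + 2) <= al * (1 + m) by apply: leq_mul => //; lia.
    have P2 : be * ((q + 1) * h') <= be * k'.
    { apply: leq_mul => //. timeout 10 nia. }
    timeout 30 nia.
  + have e : h = 1 by lia. subst h.
    have Hm : q + 1 <= m by lia.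
    have P1 : al * (q + 2) <= al * (1 + m) by apply: leq_mul => //; lia.
    have P2 : be * ((q + 1) * h') <= be * k'.
    { apply: leq_mul => //. timeout 10 nia. }
    timeout 30 nia.
Qed.

Lemma sb (a b Q : nat) : a < b -> 0 < a ->
 forall n h k h' k', h' * k = h * k' + 1 -> h * b < k * a -> a * k' < h' * b ->
  k <= Q -> k' <= Q -> h' <= k' -> 1 <= k' -> Q + 1 <= k + k' + n ->
 (exists K E, 1 <= K /\ E <= Q /\ K * b = E * a) \/
 (exists h k h' k', h' * k = h * k' + 1 /\ h * b < k * a /\ a * k' < h' * b /\
    k <= Q /\ k' <= Q /\ h' <= k' /\ Q + 1 <= k + k').
Proof.
move=> ab a0. elim=> [|n IH] h k h' k' Hd Hl Hu HkQ Hk'Q Hh' Hk' Hn.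
- right. exists h, k, h', k'. repeat split => //. lia.
- case: (leqP (Q + 1) (k + k')) => Hs.
  + right. exists h, k, h', k'. by repeat split.
  + have hk : h <= k.
    { case: (leqP h k) => // hk. have : k * a <= h * b by apply: leq_mul; lia. lia. }
    case: (ltngtP ((h + h') * b) ((k + k') * a)) => Hc.
    * apply: (IH (h + h') (k + k') h' k') => //; try lia.
    * have k1 : 1 <= k.
      { case: (posnP k) => // e; rewrite e muln0 in Hd; lia. }
      apply: (IH h k (h + h') (k + k')) => //; try lia.
    * left. exists (h + h'), (k + k'). split; last split => //; last lia.
      have : 1 <= h'.
      { case: (posnP h') => // e; rewrite e mul0n in Hu; lia. }
      lia.
Qed.

Lemma core (a b q r Q R sg : nat) : 2 <= a -> b = q * a + r -> r < a -> 1 <= r -> 1 <= q ->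
  q + a <= Q + 1 + R + sg -> q + 1 <= Q ->
  exists K E, 1 <= K /\ E <= Q /\ K * b <= R + E * a /\ E * a + K <= sg + K * b + E.
Proof.
move=> a2 Hb Hr r1 q1 HQ HQq.
have ab : a < b.
{ rewrite Hb. have : a <= q * a by rewrite leq_pmull. lia. }
have := @sb a b Q ab (ltnW a2) (Q + 1) 0 1 1 1.
case => //; try lia.
- case=> K [E [K1 [EQ HKE]]]. exists K, E. split => //. split => //. split; first lia.
  have : K < E.
  { case: (ltnP K E) => // H.
    have E1 : 0 < E.
    { case: (posnP E) => // e. rewrite e mul0n in HKE. have : 0 < K * b by rewrite muln_gt0; lia. lia. }
    have H1 : E * a < E * b by rewrite ltn_pmul2l.
    have H2 : E * b <= K * b by apply: leq_mul.
    lia. }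
  lia.
- case=> h [k [h' [k' [Hd [Hl [Hu [HkQ [Hk'Q [Hh' Hs]]]]]]]]].
  have h'1 : 1 <= h'.
  { case: (posnP h') => // e; rewrite e mul0n in Hu; lia. }
  case: (leqP (h' * b) (R + k' * a)) => Ha.
  { exists h', k'. repeat split => //. have : a * k' = k' * a by apply: mulnC. lia. }
  case: (posnP h) => h0.
  { exfalso. exact: (farey_contra Hb Hr q1 HQ HQq Hd Hl Hu Hs Ha (or_introl h0)). }
  case: (leqP (k * a + h) (sg + h * b + k)) => Hb2.
  { exists h, k. repeat split => //; lia. }
  exfalso. exact: (farey_contra Hb Hr q1 HQ HQq Hd Hl Hu Hs Ha (or_intror Hb2)).
Qed.

Lemma hrepP a2 a3 h x : reflect (exists c1 c2 c3, c1 + c2 + c3 <= h /\ x = c3 * a3 + c2 * a2 + c1)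
  (hrep a2 a3 h x).
Proof.
apply: (iffP existsP).
- case=> c1 /existsP [c2 /existsP [c3 /andP [H /eqP E]]]. by exists c1, c2, c3.
- case=> c1 [c2 [c3 [H E]]].
  have l1 : c1 < h.+1 by lia. have l2 : c2 < h.+1 by lia. have l3 : c3 < h.+1 by lia.
  exists (Ordinal l1). apply/existsP; exists (Ordinal l2). apply/existsP; exists (Ordinal l3).
  apply/andP; split => /=; [done | by apply/eqP].
Qed.

Lemma hrep_ones a2 a3 h m : m <= h -> hrep a2 a3 h m.
Proof. move=> H; apply/hrepP; exists m, 0, 0; split; lia. Qed.

Lemma hrep_mono a2 a3 h x : hrep a2 a3 h x -> hrep a2 a3 h.+1 x.
Proof. case/hrepP => c1 [c2 [c3 [H E]]]; apply/hrepP; exists c1, c2, c3; split; lia. Qed.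

Lemma hrep_addb a2 a3 h x : hrep a2 a3 h x -> hrep a2 a3 h.+1 (x + a3).
Proof.
case/hrepP => c1 [c2 [c3 [H E]]]; apply/hrepP; exists c1, c2, c3.+1; split; first lia.
rewrite E mulSn. lia.
Qed.

Lemma X_spec a2 a3 h : (forall m, m <= X a2 a3 h -> hrep a2 a3 h m) /\ ~~ hrep a2 a3 h (X a2 a3 h).+1.
Proof.
rewrite /X. case: ex_minnP => N /andP [N0 HN] Hmin. split.
- move=> m Hm. case: (posnP m) => [->|m0]; first exact: hrep_ones.
  case Hr: (hrep a2 a3 h m) => //. have := Hmin m. rewrite /no_hrep_pos m0 Hr /= => /(_ isT). lia.
- by rewrite prednK.
Qed.

Lemma X_ge a2 a3 h n : (forall m, m <= n -> hrep a2 a3 h m) -> n <= X a2 a3 h.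
Proof.
move=> H. case: (leqP n (X a2 a3 h)) => // Hl.
have [_ /negP] := X_spec a2 a3 h. by case; apply: H.
Qed.

Lemma X_le a2 a3 h n : ~~ hrep a2 a3 h n.+1 -> X a2 a3 h <= n.
Proof.
move=> /negP H. case: (leqP (X a2 a3 h) n) => // Hl.
have [Hs _] := X_spec a2 a3 h. by case: H; apply: Hs.
Qed.

Definition Cprop a2 a3 h := forall c1 c2, c1 + c2 <= h.+1 -> a3 <= c2 * a2 + c1 ->
  hrep a2 a3 h (c2 * a2 + c1 - a3).

Lemma step a2 a3 h : a3 <= (X a2 a3 h).+1 -> Cprop a2 a3 h ->
  X a2 a3 h.+1 = X a2 a3 h + a3.
Proof.
move=> Hx HC. apply/eqP; rewrite eqn_leq; apply/andP; split.
- apply: X_le. apply/negP => /hrepP [c1 [c2 [c3 [H E]]]].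
  have [_ /negP Hn] := X_spec a2 a3 h. apply: Hn.
  case: (posnP c3) => c30.
  + subst c3. have := HC c1 c2 _ _. rewrite mul0n add0n in E.
    move=> /(_ _ _)/Wrap[]. lia. lia.
    by rewrite -E; congr hrep; lia.
  + apply/hrepP; exists c1, c2, c3.-1; split; first lia.
    have : c3 = c3.-1.+1 by lia. move=> e; rewrite e mulSn in E. lia.
- apply: X_ge => m Hm. have [Hs _] := X_spec a2 a3 h.
  case: (leqP m (X a2 a3 h)) => Hm2; first by apply: hrep_mono; apply: Hs.
  have -> : m = (m - a3) + a3 by lia.
  apply: hrep_addb; apply: Hs; lia.
Qed.

Lemma Cprop_big a2 a3 h : 1 < a2 -> a2 < a3 -> a3 %/ a2 + a2 <= h + 2 -> Cprop a2 a3 h.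
Proof.
move=> a2g a23 Hh c1 c2 Hs Ht.
have Hb : a3 = a3 %/ a2 * a2 + a3 %% a2 := divn_eq a3 a2.
have Hr : a3 %% a2 < a2 by rewrite ltn_mod; lia.
have q1 : 1 <= a3 %/ a2 by rewrite divn_gt0; lia.
move: Hb Hr q1 Hh. set q := a3 %/ a2. set r := a3 %% a2. move=> Hb Hr q1 Hh.
have Ec1 : c1 = c1 %/ a2 * a2 + c1 %% a2 := divn_eq c1 a2.
have ER : c1 %% a2 < a2 by rewrite ltn_mod; lia.
have Hle : c1 %/ a2 <= c1 %/ a2 * a2 by rewrite leq_pmulr; lia.
move: Ec1 ER Hle. set R := c1 %% a2. set D := c1 %/ a2. move=> Ec1 ER Hle.
have Et : c2 * a2 + c1 = (c2 + D) * a2 + R by rewrite mulnDl; lia.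
rewrite Et in Ht *. move: Ht. set Q := c2 + D. move=> Ht.
have HQR : Q + R <= h.+1 by rewrite /Q; lia.
case: (leqP r R) => HR.
- have HQ : q <= Q.
  { case: (leqP q Q) => // HQ. have : (Q + 1) * a2 <= q * a2 by apply: leq_mul; lia.
    rewrite mulnDl mul1n. lia. }
  apply/hrepP; exists (R - r), (Q - q), 0. split; first lia.
  rewrite mul0n add0n mulnBl.
  have : q * a2 <= Q * a2 by apply: leq_mul.
  lia.
- have HQ : q + 1 <= Q.
  { case: (leqP (q + 1) Q) => // HQ. have : Q * a2 <= q * a2 by apply: leq_mul; lia.
    lia. }
  have [K [E [K1 [EQ [H1 H2]]]]] := @core a2 a3 q r Q R (h.+1 - (Q + R)) a2g Hb Hr
     ltac:(lia) q1 ltac:(lia) HQ.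
  apply/hrepP; exists (R + E * a2 - K * a3), (Q - E), K.-1. split; first lia.
  have e1 : K.-1 * a3 = K * a3 - a3 by rewrite -subn1 mulnBl mul1n.
  have e2 : (Q - E) * a2 = Q * a2 - E * a2 by rewrite mulnBl.
  have e3 : E * a2 <= Q * a2 by apply: leq_mul.
  have e4 : a3 <= K * a3 by rewrite leq_pmull.
  rewrite e1 e2. lia.
Qed.

Lemma h_lb a2 a3 h : 1 < a2 -> a2 < a3 -> a3 <= X a2 a3 h -> a3 %/ a2 + a2 <= h + 2.
Proof.
move=> a2g a23 HX.
have Hb : a3 = a3 %/ a2 * a2 + a3 %% a2 := divn_eq a3 a2.
have q1 : 1 <= a3 %/ a2 by rewrite divn_gt0; lia.
move: Hb q1. set q := a3 %/ a2. set r := a3 %% a2. move=> Hb q1.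
have [Hs _] := X_spec a2 a3 h.
have qa : 1 <= q * a2 by rewrite muln_gt0; lia.
have := Hs (q * a2 - 1) ltac:(lia).
case/hrepP => c1 [c2 [c3 [H E]]].
have c30 : c3 = 0.
{ case: (posnP c3) => // c3p. have : a3 <= c3 * a3 by rewrite leq_pmull. lia. }
subst c3. rewrite mul0n add0n in E.
have c2q : c2 < q.
{ case: (ltnP c2 q) => // Hc. have : q * a2 <= c2 * a2 by apply: leq_mul. lia. }
have [q' eq] : exists q', q = q'.+1 by exists q.-1; lia.
have [a' ea] : exists a', a2 = a'.+1 by exists a2.-1; lia.
have P : c2 * a' <= q' * a' by apply: leq_mul; lia.
rewrite eq ea in E P c2q *. rewrite !mulSn !mulnS in E. lia.
Qed.

Lemma min_exists (P : nat -> Prop) : (exists n, P n) -> exists n, P n /\ forall m, P m -> n <= m.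
Proof.
move=> [n Pn].
suff H : forall N n, n <= N -> P n -> exists n0, P n0 /\ forall m, P m -> n0 <= m.
  by apply: (H n n).
elim=> [|N IH] {n Pn} n Hn Pn.
- exists n; split => // m _. lia.
- case: (classic (exists m, m < n /\ P m)) => [[m [Hm Pm]]|Hno].
  + apply: (IH m) => //; lia.
  + exists n; split => // m Pm. case: (leqP n m) => // Hmn.
    exfalso; apply: Hno; by exists m.
Qed.

Theorem mainTheorem5 (a2 a3 : nat) :
  1 < a2 -> a2 < a3 ->
  exists h0 h1, is_h0 a2 a3 h0 /\ is_h1 a2 a3 h1 /\ h1 <= h0.
Proof.
move=> Ha Hb.
have Hex : exists h, a3 <= X a2 a3 h.
{ exists a3. apply: X_ge => m Hm; exact: hrep_ones. }
case: (ex_minnP Hex) => h0 H0 Hmin0.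
have stab : forall d, a3 <= X a2 a3 (h0 + d) /\ X a2 a3 (h0 + d).+1 = X a2 a3 (h0 + d) + a3.
{ elim => [|d [IH1 IH2]].
  - rewrite addn0; split => //. apply: step; first lia.
    apply: Cprop_big => //. exact: h_lb H0.
  - have H1 : a3 <= X a2 a3 (h0 + d.+1) by rewrite addnS IH2; lia.
    split => //. apply: step; first lia. apply: Cprop_big => //; exact: h_lb H1. }
have Hst : stable_from a2 a3 h0.
{ move=> h' Hh'. have := stab (h' - h0). rewrite subnKC //. by case. }
have [h1 [Hs1 Hmin1]] := min_exists (ex_intro _ h0 Hst).
exists h0, h1. split; first by split => // h' Hh'; exact: Hmin0.
split; first by split. exact: Hmin1.
Qed.
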